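(* Let $l:\mathbb{R}^n\times\mathbb{R}^m\times\mathbb{R}^d\to\mathbb{R}$ be $\ell_1$-smooth and $L_1$-Lipschitz continuous, let $\mathcal{Y}\subset\mathbb{R}^m$ be nonempty, closed, convex and bounded, and let $l(x,\cdot,z)$ be $\mu$-strongly concave on $\mathcal{Y}$ for every $(x,z)$. Fix an iteration $k$ with center $\widehat x^k\in\mathbb{R}^n$, radius $\delta_k\in(0,\delta_{\max}]$, an affine model with $\|\widehat B^{k,1}\|_F\le B$, and define $\mathcal{L}^k$, $\Phi^k$, $y^{k,*}$, $\widehat L_1=L_1(1+B)$, $\widehat\ell_1=\ell_1(1+B)^2$ as in the context. Let $y^{i,*}:\mathcal{B}(\widehat x^k,\delta_k)\to\mathcal{Y}$ be any map and put $g_k=\nabla_x\mathcal{L}^k(\widehat x^k,y^{i,*}(\widehat x^k))$. Assume $g_k\neq0$, $\nabla\Phi^k(\widehat x^k)\neq 0$, and that for some $\tilde\kappa_{dcp}>0$, $$\Phi^k(\widehat x^k)-\Phi^k(\widehat x^k+\tilde s^k)\ge\tilde\kappa_{dcp}\|\nabla\Phi^k(\widehat x^k)\|\min\{\delta_k,1\},\qquad \tilde s^k=-\delta_k\frac{\nabla\Phi^k(\widehat x^k)}{\|\nabla\Phi^k(\widehat x^k)\|}.$$ Suppose further that $\|y^{i,*}(x)-y^{k,*}(x)\|\le\epsilon$ for all $x\in\mathcal{B}(\widehat x^k,\delta_k)$, where $$\epsilon\le\min\Big\{\frac{\|g_k\|}{2\widehat\ell_1},\ \frac{\|\nabla\Phi^k(\widehat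 x^k)\|\,\|g_k\|\,\tilde\kappa_{dcp}}{8\widehat L_1\widehat\ell_1\max\{\delta_{\max},1\}},\ \frac{\|g_k\|\min\{\delta_k,1\}\tilde\kappa_{dcp}}{16\widehat L_1}\Big\}.$$ Then, with $s^k=-\delta_k g_k/\|g_k\|$ and $\kappa_{dcp}=\tilde\kappa_{dcp}/8$, $$\mathcal{L}^k(\widehat x^k,y^{i,*}(\widehat x^k))-\mathcal{L}^k(\widehat x^k+s^k,y^{i,*}(\widehat x^k+s^k))\ge\kappa_{dcp}\|g_k\|\min\{\delta_k,1\}.$$
   Context: Notation: $\mathcal{B}(x,\delta)=\{z:\|z-x\|\le\delta\}$. Given data points $x^1,\dots,x^{N_k}$ and observations $\omega^1,\dots,\omega^{N_k}\in\mathbb{R}^d$, affine coefficients $\widehat B^{k,1}\in\mathbb{R}^{n\times d}$, $\widehat B^{k,0}\in\mathbb{R}^{1\times d}$ (the least-squares fit of $\omega^i$ on $x^i$) and residuals $e^{k,i}=\omega^i-(\widehat B^{k,1})^\top x^i-(\widehat B^{k,0})^\top$, the local model is $m_k(x,e)=(\widehat B^{k,1})^\top x+(\widehat B^{k,0})^\top+e$, and $\mathcal{L}^k(x,y)=\frac1{N_k}\sum_{i=1}^{N_k}l(x,y,m_k(x,e^{k,i}))$, $\Phi^k(x)=\max_{y\in\mathcal{Y}}\mathcal{L}^k(x,y)$, $y^{k,*}(x)=\arg\max_{y\in\mathcal{Y}}\mathcal{L}^k(x,y)$ (unique by strong concavity). $\ell$-smooth means differentiable with $\ell$-Lipschitz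 gradient. *)

(* Defs.v *)
From mathcomp Require Import all_boot all_order all_algebra.
From mathcomp Require Import reals.
Set Implicit Arguments. Unset Strict Implicit. Unset Printing Implicit Defensive.
Import Order.TTheory GRing.Theory Num.Theory.
Local Open Scope ring_scope.

Section Defs.
Variable R : realType.

Definition dotv k (u v : 'rV[R]_k) : R := \sum_(i < k) u 0 i * v 0 i.
Definition enorm k (v : 'rV[R]_k) : R := Num.sqrt (dotv v v).
Definition frob p q (A : 'M[R]_(p, q)) : R :=
  Num.sqrt (\sum_(i < p) \sum_(j < q) A i j ^+ 2).
Definition tnorm n m d (x : 'rV[R]_n) (y : 'rV[R]_m) (z : 'rV[R]_d) : R :=
  Num.sqrt (dotv x x + dotv y y + dotv z z).

Definition eball n (x : 'rV[R]_n) (delta : R) (z : 'rV[R]_n) : Prop :=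
  enorm (z - x) <= delta.

Definition has_grad n (f : 'rV[R]_n -> R) (x g : 'rV[R]_n) : Prop :=
  forall eps : R, 0 < eps -> exists2 del : R, 0 < del &
    forall h : 'rV[R]_n, enorm h <= del ->
      `|f (x + h) - f x - dotv g h| <= eps * enorm h.

Definition has_grad3 n m d (f : 'rV[R]_n -> 'rV[R]_m -> 'rV[R]_d -> R)
    x y z (gx : 'rV[R]_n) (gy : 'rV[R]_m) (gz : 'rV[R]_d) : Prop :=
  forall eps : R, 0 < eps -> exists2 del : R, 0 < del &
    forall hx hy hz, tnorm hx hy hz <= del ->
      `|f (x + hx) (y + hy) (z + hz) - f x y z
         - (dotv gx hx + dotv gy hy + dotv gz hz)| <= eps * tnorm hx hy hz.

Definition smooth3 n m d (ell : R) (f : 'rV[R]_n -> 'rV[R]_m -> 'rV[R]_d -> R)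
  : Prop :=
  exists Gx : 'rV[R]_n -> 'rV[R]_m -> 'rV[R]_d -> 'rV[R]_n,
  exists Gy : 'rV[R]_n -> 'rV[R]_m -> 'rV[R]_d -> 'rV[R]_m,
  exists Gz : 'rV[R]_n -> 'rV[R]_m -> 'rV[R]_d -> 'rV[R]_d,
    (forall x y z, has_grad3 f x y z (Gx x y z) (Gy x y z) (Gz x y z)) /\
    (forall x y z x' y' z',
       tnorm (Gx x y z - Gx x' y' z') (Gy x y z - Gy x' y' z')
             (Gz x y z - Gz x' y' z')
       <= ell * tnorm (x - x') (y - y') (z - z')).

Definition lipschitz3 n m d (L : R) (f : 'rV[R]_n -> 'rV[R]_m -> 'rV[R]_d -> R)
  : Prop :=
  forall x y z x' y' z',
    `|f x y z - f x' y' z'| <= L * tnorm (x - x') (y - y') (z - z').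

Definition convex_set m (Y : 'rV[R]_m -> Prop) : Prop :=
  forall y1 y2 (t : R), Y y1 -> Y y2 -> 0 <= t -> t <= 1 ->
    Y (t *: y1 + (1 - t) *: y2).
Definition closed_set m (Y : 'rV[R]_m -> Prop) : Prop :=
  forall y, (forall eps : R, 0 < eps -> exists2 y', Y y' & enorm (y - y') < eps)
    -> Y y.
Definition bounded_set m (Y : 'rV[R]_m -> Prop) : Prop :=
  exists M : R, forall y, Y y -> enorm y <= M.
Definition nonempty_set m (Y : 'rV[R]_m -> Prop) : Prop := exists y, Y y.

Definition strongly_concave_on m (mu : R) (Y : 'rV[R]_m -> Prop)
  (g : 'rV[R]_m -> R) : Prop :=
  forall y1 y2 (t : R), Y y1 -> Y y2 -> 0 <= t -> t <= 1 ->
    t * g y1 + (1 - t) * g y2 + mu / 2 * t * (1 - t) * enorm (y1 - y2) ^+ 2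
      <= g (t *: y1 + (1 - t) *: y2).

(* residuals e^{k,i} = omega^i - (B1)^T x^i - (B0)^T, in row-vector form *)
Definition resid n d N (X : 'I_N -> 'rV[R]_n) (W : 'I_N -> 'rV[R]_d)
  (B1 : 'M[R]_(n, d)) (B0 : 'rV[R]_d) (i : 'I_N) : 'rV[R]_d :=
  W i - X i *m B1 - B0.

Definition least_squares_fit n d N (X : 'I_N -> 'rV[R]_n) (W : 'I_N -> 'rV[R]_d)
  (B1 : 'M[R]_(n, d)) (B0 : 'rV[R]_d) : Prop :=
  forall (C1 : 'M[R]_(n, d)) (C0 : 'rV[R]_d),
    \sum_(i < N) enorm (resid X W B1 B0 i) ^+ 2
      <= \sum_(i < N) enorm (resid X W C1 C0 i) ^+ 2.

Definition mk n d (B1 : 'M[R]_(n, d)) (B0 : 'rV[R]_d) (x : 'rV[R]_n)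
  (e : 'rV[R]_d) : 'rV[R]_d := x *m B1 + B0 + e.

Definition Lk n m d N (l : 'rV[R]_n -> 'rV[R]_m -> 'rV[R]_d -> R)
  (X : 'I_N -> 'rV[R]_n) (W : 'I_N -> 'rV[R]_d)
  (B1 : 'M[R]_(n, d)) (B0 : 'rV[R]_d) (x : 'rV[R]_n) (y : 'rV[R]_m) : R :=
  (N%:R)^-1 * \sum_(i < N) l x y (mk B1 B0 x (resid X W B1 B0 i)).

End Defs.

(* Main.v *)
Require Import Defs.
From mathcomp Require Import all_boot all_order all_algebra.
From mathcomp Require Import reals.
From mathcomp Require Import ring lra.
Import Order.TTheory GRing.Theory Num.Theory.
Local Open Scope ring_scope.

Set Implicit Arguments. Unset Strict Implicit.

Section Norms.
Variable R : realType.
Implicit Types a b c : R.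

Lemma sqrt_le_of (x y : R) : 0 <= y -> x <= y ^+ 2 -> Num.sqrt x <= y.
Proof.
move=> y0 h; apply: (le_trans (ler_wsqrtr h)).
by rewrite sqrtr_sqr ger0_norm.
Qed.

Lemma dotvDl k (u v w : 'rV[R]_k) : dotv (u + v) w = dotv u w + dotv v w.
Proof. by rewrite /dotv -big_split; apply: eq_bigr => i _; rewrite !mxE mulrDl. Qed.
Lemma dotvZl k a (u w : 'rV[R]_k) : dotv (a *: u) w = a * dotv u w.
Proof. by rewrite /dotv mulr_sumr; apply: eq_bigr => i _; rewrite !mxE mulrA. Qed.
Lemma dotvC k (u w : 'rV[R]_k) : dotv u w = dotv w u.
Proof. by apply: eq_bigr => i _; rewrite mulrC. Qed.
Lemma dotv0l k (w : 'rV[R]_k) : dotv 0 w = 0.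
Proof. by rewrite /dotv big1 // => i _; rewrite mxE mul0r. Qed.
Lemma dotv0r k (w : 'rV[R]_k) : dotv w 0 = 0.
Proof. by rewrite dotvC dotv0l. Qed.
Lemma dotvDr k (u v w : 'rV[R]_k) : dotv w (u + v) = dotv w u + dotv w v.
Proof. by rewrite dotvC dotvDl !(dotvC w). Qed.
Lemma dotvZr k a (u w : 'rV[R]_k) : dotv w (a *: u) = a * dotv w u.
Proof. by rewrite dotvC dotvZl dotvC. Qed.
Lemma dotvNl k (u w : 'rV[R]_k) : dotv (- u) w = - dotv u w.
Proof. by rewrite -scaleN1r dotvZl mulN1r. Qed.
Lemma dotvNr k (u w : 'rV[R]_k) : dotv w (- u) = - dotv w u.
Proof. by rewrite dotvC dotvNl dotvC. Qed.
Lemma dotv_ge0 k (u : 'rV[R]_k) : 0 <= dotv u u.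
Proof. by apply: sumr_ge0 => i _; rewrite -expr2 sqr_ge0. Qed.
Lemma dotvE k (u w : 'rV[R]_k) : dotv u w = (u *m w^T) 0 0.
Proof. by rewrite mxE; apply: eq_bigr => i _; rewrite mxE. Qed.

Lemma enorm_ge0 k (u : 'rV[R]_k) : 0 <= enorm u.
Proof. exact: sqrtr_ge0. Qed.
Lemma enorm_sq k (u : 'rV[R]_k) : enorm u ^+ 2 = dotv u u.
Proof. by rewrite sqr_sqrtr // dotv_ge0. Qed.
Lemma enorm0 k : enorm (0 : 'rV[R]_k) = 0.
Proof. by rewrite /enorm dotv0l sqrtr0. Qed.
Lemma enorm_eq0 k (u : 'rV[R]_k) : enorm u = 0 -> u = 0.
Proof.
move=> h; have : dotv u u = 0 by rewrite -enorm_sq h expr0n.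
move/eqP; rewrite psumr_eq0 => [/allP H|i _]; last by rewrite -expr2 sqr_ge0.
apply/rowP => j; rewrite mxE.
have := H j (mem_index_enum _); rewrite implyTb mulf_eq0 orbb.
by move/eqP.
Qed.
Lemma enorm_gt0 k (u : 'rV[R]_k) : u != 0 -> 0 < enorm u.
Proof.
move=> h; rewrite lt_neqAle enorm_ge0 andbT; apply/eqP => e.
by move: h; rewrite (enorm_eq0 (esym e)) eqxx.
Qed.
Lemma enormZ k a (u : 'rV[R]_k) : enorm (a *: u) = `|a| * enorm u.
Proof.
by rewrite /enorm dotvZl dotvZr mulrA -expr2 sqrtrM ?sqr_ge0 // sqrtr_sqr.
Qed.
Lemma enormN k (u : 'rV[R]_k) : enorm (- u) = enorm u.
Proof. by rewrite -scaleN1r enormZ normrN1 mul1r. Qed.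

Lemma cauchy_schwarz k (u v : 'rV[R]_k) : dotv u v <= enorm u * enorm v.
Proof.
have [u0|] := eqVneq u 0; first by rewrite u0 dotv0l enorm0 mul0r.
move=> /enorm_gt0 pu.
have [v0|] := eqVneq v 0; first by rewrite v0 dotv0r enorm0 mulr0.
move=> /enorm_gt0 qv.
set p := enorm u in pu *; set q := enorm v in qv *.
have h := dotv_ge0 (q *: u - p *: v).
rewrite !(dotvDl, dotvDr, dotvNl, dotvNr, dotvZl, dotvZr) in h.
rewrite -!enorm_sq -/p -/q (dotvC v u) in h.
have pq : 0 < p * q by apply: mulr_gt0.
nra.
Qed.

Lemma abs_dotv k (u v : 'rV[R]_k) : `|dotv u v| <= enorm u * enorm v.
Proof.
rewrite ler_norml cauchy_schwarz andbT lerNl -dotvNl.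
by apply: (le_trans (cauchy_schwarz _ _)); rewrite enormN.
Qed.

Lemma enormD k (u v : 'rV[R]_k) : enorm (u + v) <= enorm u + enorm v.
Proof.
apply: sqrt_le_of; first by rewrite addr_ge0 ?enorm_ge0.
rewrite !(dotvDl, dotvDr) (dotvC v u) -!enorm_sq.
have := cauchy_schwarz u v; nra.
Qed.

Lemma enormB_rev k (u v : 'rV[R]_k) : `|enorm u - enorm v| <= enorm (u - v).
Proof.
rewrite ler_norml; apply/andP; split.
  have e : enorm (v - u) = enorm (u - v) by rewrite -opprB enormN.
  have := enormD (v - u) u; rewrite subrK e; lra.
have := enormD (u - v) v; rewrite subrK; lra.
Qed.

Lemma enorm_sum I (s : seq I) k (F : I -> 'rV[R]_k) :
  enorm (\sum_(i <- s) F i) <= \sum_(i <- s) enorm (F i).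
Proof.
elim: s => [|x s IH]; first by rewrite !big_nil enorm0.
rewrite !big_cons; apply: (le_trans (enormD _ _)); exact: lerD.
Qed.
End Norms.

Set Implicit Arguments. Unset Strict Implicit.

Section Mx.
Variable R : realType.

Lemma frob_ge0 p q (A : 'M[R]_(p, q)) : 0 <= frob A.
Proof. exact: sqrtr_ge0. Qed.

Lemma frob_sq p q (A : 'M[R]_(p, q)) :
  frob A ^+ 2 = \sum_(j < q) \sum_(i < p) A i j * A i j.
Proof.
rewrite sqr_sqrtr; last by do 2 (apply: sumr_ge0 => ? _); exact: sqr_ge0.
rewrite exchange_big /=; apply: eq_bigr => i _; apply: eq_bigr => j _.
by rewrite expr2.
Qed.

Lemma frob_tr p q (A : 'M[R]_(p, q)) : frob A^T = frob A.
Proof.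
rewrite /frob exchange_big /=; congr Num.sqrt.
by apply: eq_bigr => i _; apply: eq_bigr => j _; rewrite mxE.
Qed.

Lemma enorm_mulmx k p (v : 'rV[R]_k) (A : 'M[R]_(k, p)) :
  enorm (v *m A) <= enorm v * frob A.
Proof.
apply: sqrt_le_of; first by rewrite mulr_ge0 ?enorm_ge0 ?frob_ge0.
rewrite exprMn enorm_sq frob_sq mulr_sumr {1}/dotv.
apply: ler_sum => j _.
have e : (v *m A) 0 j = dotv v (\row_i A i j).
  by rewrite mxE /dotv; apply: eq_bigr => i _; rewrite mxE.
have e2 : \sum_(i < k) A i j * A i j = dotv (\row_i A i j) (\row_i A i j).
  by apply: eq_bigr => i _; rewrite mxE.
rewrite e e2 -(enorm_sq v) -(enorm_sq (\row_i A i j)) -exprMn -expr2 -real_normK ?num_real //.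
rewrite lerXn2r ?nnegrE ?normr_ge0 ?mulr_ge0 ?enorm_ge0 //.
exact: abs_dotv.
Qed.

Lemma tnorm_ge1 n m d (a : 'rV[R]_n) (b : 'rV[R]_m) (c : 'rV[R]_d) :
  enorm a <= tnorm a b c.
Proof. by apply: ler_wsqrtr; rewrite -addrA lerDl addr_ge0 ?dotv_ge0. Qed.
Lemma tnorm_ge3 n m d (a : 'rV[R]_n) (b : 'rV[R]_m) (c : 'rV[R]_d) :
  enorm c <= tnorm a b c.
Proof. by apply: ler_wsqrtr; rewrite lerDr addr_ge0 ?dotv_ge0. Qed.
Lemma tnorm_le n m d (a : 'rV[R]_n) (b : 'rV[R]_m) (c : 'rV[R]_d) :
  tnorm a b c <= enorm a + enorm b + enorm c.
Proof.
apply: sqrt_le_of; first by rewrite !addr_ge0 ?enorm_ge0.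
rewrite -!enorm_sq.
have := enorm_ge0 a; have := enorm_ge0 b; have := enorm_ge0 c; nra.
Qed.
Lemma tnorm_0y0 n m d (b : 'rV[R]_m) :
  tnorm (0 : 'rV[R]_n) b (0 : 'rV[R]_d) = enorm b.
Proof. by rewrite /tnorm !dotv0l add0r addr0. Qed.
Lemma tnorm_x00 n m d (a : 'rV[R]_n) :
  tnorm a (0 : 'rV[R]_m) (0 : 'rV[R]_d) = enorm a.
Proof. by rewrite /tnorm !dotv0l !addr0. Qed.
Lemma tnorm_x0B n m d (a : 'rV[R]_n) (B1 : 'M[R]_(n, d)) :
  tnorm a (0 : 'rV[R]_m) (a *m B1) <= (1 + frob B1) * enorm a.
Proof.
apply: (le_trans (tnorm_le _ _ _)); rewrite enorm0 addr0 mulrDl mul1r lerD2l.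
by rewrite mulrC enorm_mulmx.
Qed.
End Mx.

Set Implicit Arguments. Unset Strict Implicit.

Section Grad.
Variable R : realType.
Variable n : nat.
Implicit Types (f : 'rV[R]_n -> R) (x g : 'rV[R]_n).

Lemma has_grad_ext f f' x g : (forall z, f z = f' z) -> has_grad f x g -> has_grad f' x g.
Proof.
move=> e hg eps he; have [del dp H] := hg eps he; exists del => // h hh.
by rewrite -!e; apply: H.
Qed.

Lemma has_grad_add f1 f2 x g1 g2 : has_grad f1 x g1 -> has_grad f2 x g2 ->
  has_grad (fun z => f1 z + f2 z) x (g1 + g2).
Proof.
move=> h1 h2 e he.
have e2 : 0 < e / 2 by rewrite divr_gt0.
have [d1 d1p H1] := h1 _ e2; have [d2 d2p H2] := h2 _ e2.
exists (Num.min d1 d2); first by rewrite lt_min d1p d2p.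
move=> h; rewrite le_min => /andP[hd1 hd2].
have E : f1 (x+h) + f2 (x+h) - (f1 x + f2 x) - dotv (g1+g2) h =
  (f1 (x+h) - f1 x - dotv g1 h) + (f2 (x+h) - f2 x - dotv g2 h).
  by rewrite dotvDl; ring.
rewrite E; apply: le_trans (ler_normD _ _) _.
have := H1 h hd1; have := H2 h hd2; lra.
Qed.

Lemma has_grad_opp f x g : has_grad f x g -> has_grad (fun z => - f z) x (- g).
Proof.
move=> hg e he; have [del dp H] := hg e he; exists del => // h hh.
have E : - f (x + h) - - f x - dotv (- g) h = - (f (x + h) - f x - dotv g h).
  by rewrite dotvNl; ring.
by rewrite E normrN; apply: H.
Qed.

Lemma has_grad_scale f x g (c : R) : 0 < c ->
  has_grad f x g -> has_grad (fun z => c * f z) x (c *: g).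
Proof.
move=> c0 hg e he; have [del dp H] := hg (e / c) (divr_gt0 he c0).
exists del => // h hh.
have E : c * f (x + h) - c * f x - dotv (c *: g) h = c * (f (x + h) - f x - dotv g h).
  by rewrite dotvZl; ring.
rewrite E normrM (gtr0_norm c0).
have := H h hh => H'.
have -> : e * enorm h = c * (e / c * enorm h).
  by rewrite mulrA mulrCA divff ?mulr1 // gt_eqF.
by rewrite ler_pM2l.
Qed.

Lemma has_grad_sum I (s : seq I) (F : I -> 'rV[R]_n -> R) x (G : I -> 'rV[R]_n) :
  (forall i, has_grad (F i) x (G i)) ->
  has_grad (fun z => \sum_(i <- s) F i z) x (\sum_(i <- s) G i).
Proof.
move=> hg; elim: s => [|i s IH].
  rewrite big_nil => e he; exists 1 => // h _.
  by rewrite !big_nil dotv0l !subr0 normr0 mulr_ge0 ?enorm_ge0 // ltW.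
rewrite big_cons; apply: (has_grad_ext _ (has_grad_add (hg i) IH)).
by move=> z /=; rewrite big_cons.
Qed.

Lemma has_grad_min f x g : has_grad f x g -> (forall z, f x <= f z) -> g = 0.
Proof.
move=> hg hmin; apply/eqP; apply: contraT => gn0.
have pg := enorm_gt0 gn0.
have g2 : 0 < enorm g / 2 by rewrite divr_gt0.
have [del dp H] := hg (enorm g / 2) g2.
set h := (-(del / enorm g)) *: g.
have nh : enorm h = del.
  by rewrite /h enormZ normrN ger0_norm ?divfK ?gt_eqF // divr_ge0 // ltW.
have dh : dotv g h = - (del * enorm g).
  by rewrite /h dotvZr -enorm_sq expr2 mulNr mulrA divfK // gt_eqF.
have hh : enorm h <= del by rewrite nh.
have := H h hh.
rewrite nh dh => H'.
have := hmin (x + h) => hm.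
have := ler_norm (f (x + h) - f x - - (del * enorm g)) => hn.
have : del * enorm g <= enorm g / 2 * del by lra.
rewrite [_ / 2 * _]mulrC ler_pM2l //; lra.
Qed.
End Grad.

Set Implicit Arguments. Unset Strict Implicit.

Section Prob.
Variable R : realType.
Variables (n m d N : nat).
Variable l : 'rV[R]_n -> 'rV[R]_m -> 'rV[R]_d -> R.
Variables (X : 'I_N -> 'rV[R]_n) (W : 'I_N -> 'rV[R]_d).
Variables (B1 : 'M[R]_(n, d)) (B0 : 'rV[R]_d).
Hypothesis N0 : (0 < N)%N.

Local Notation zi x i := (mk B1 B0 x (resid X W B1 B0 i)).

Lemma N0R : (N%:R : R) != 0.
Proof. by rewrite pnatr_eq0 -lt0n. Qed.

Lemma avg_bound (F : 'I_N -> R) c : (forall i, `|F i| <= c) ->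
  `|N%:R^-1 * \sum_(i < N) F i| <= c.
Proof.
move=> h; rewrite normrM ger0_norm ?invr_ge0 ?ler0n //.
have s1 : `|\sum_(i < N) F i| <= N%:R * c.
  apply: (le_trans (ler_norm_sum _ _ _)).
  apply: (le_trans (ler_sum _ (fun i _ => h i))).
  by rewrite sumr_const card_ord mulr_natl.
rewrite -[c in _ <= c](mulKf N0R c).
by apply: ler_wpM2l; rewrite ?invr_ge0 ?ler0n.
Qed.

Lemma avg_bound_v k (F : 'I_N -> 'rV[R]_k) c : (forall i, enorm (F i) <= c) ->
  enorm (N%:R^-1 *: \sum_(i < N) F i) <= c.
Proof.
move=> h; rewrite enormZ ger0_norm ?invr_ge0 ?ler0n //.
have s1 : enorm (\sum_(i < N) F i) <= N%:R * c.
  apply: (le_trans (enorm_sum _ _)).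
  apply: (le_trans (ler_sum _ (fun i _ => h i))).
  by rewrite sumr_const card_ord mulr_natl.
rewrite -[c in _ <= c](mulKf N0R c).
by apply: ler_wpM2l; rewrite ?invr_ge0 ?ler0n.
Qed.

Lemma mk_diff x x' e : mk B1 B0 x e - mk B1 B0 x' e = (x - x') *m B1.
Proof.
by rewrite /mk mulmxBl; apply/rowP => j; rewrite !mxE; ring.
Qed.

Lemma mk_add x h e : mk B1 B0 (x + h) e = mk B1 B0 x e + h *m B1.
Proof. by rewrite /mk mulmxDl; apply/rowP => j; rewrite !mxE; ring. Qed.

Lemma LipY (L1 : R) : lipschitz3 L1 l -> forall x y y',
  `|Lk l X W B1 B0 x y - Lk l X W B1 B0 x y'| <= L1 * enorm (y - y').
Proof.
move=> hL x y y'; rewrite /Lk -mulrBr -sumrB; apply: avg_bound => i.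
by have := hL x y (zi x i) x y' (zi x i); rewrite !subrr tnorm_0y0.
Qed.

Lemma LipX (L1 : R) : 0 <= L1 -> lipschitz3 L1 l -> forall x x' y,
  `|Lk l X W B1 B0 x y - Lk l X W B1 B0 x' y|
     <= L1 * (1 + frob B1) * enorm (x - x').
Proof.
move=> L0 hL x x' y; rewrite /Lk -mulrBr -sumrB; apply: avg_bound => i.
have := hL x y (zi x i) x' y (zi x' i); rewrite subrr mk_diff => H.
apply: (le_trans H); rewrite -mulrA; apply: ler_wpM2l => //.
exact: tnorm_x0B.
Qed.

Lemma dotv_tr k p (u : 'rV[R]_p) (A : 'M[R]_(k, p)) (h : 'rV[R]_k) :
  dotv (u *m A^T) h = dotv u (h *m A).
Proof. by rewrite !dotvE trmx_mul mulmxA. Qed.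

Section G.
Variables (Gx : 'rV[R]_n -> 'rV[R]_m -> 'rV[R]_d -> 'rV[R]_n)
  (Gy : 'rV[R]_n -> 'rV[R]_m -> 'rV[R]_d -> 'rV[R]_m)
  (Gz : 'rV[R]_n -> 'rV[R]_m -> 'rV[R]_d -> 'rV[R]_d).
Hypothesis hg : forall x y z, has_grad3 l x y z (Gx x y z) (Gy x y z) (Gz x y z).

Lemma grad_i y e x0 :
  has_grad (fun x => l x y (mk B1 B0 x e)) x0
    (Gx x0 y (mk B1 B0 x0 e) + Gz x0 y (mk B1 B0 x0 e) *m B1^T).
Proof.
move=> eps he; set c := 1 + frob B1.
have c0 : 0 < c by have := frob_ge0 B1; rewrite /c; lra.
have [del dp H] := hg x0 y (mk B1 B0 x0 e) (divr_gt0 he c0).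
exists (del / c) => [|h hh]; first by rewrite divr_gt0.
have ht : tnorm h (0 : 'rV[R]_m) (h *m B1) <= del.
  apply: (le_trans (@tnorm_x0B R n m d h B1)); rewrite -/c.
  by rewrite mulrC -ler_pdivlMr.
have := H h 0 (h *m B1) ht.
rewrite addr0 -mk_add dotv0r addr0 dotvDl dotv_tr => H'.
have cn : c != 0 by rewrite gt_eqF.
apply: (le_trans H'); apply: (@le_trans _ _ (eps / c * (c * enorm h))).
  apply: ler_wpM2l; first by rewrite divr_ge0 // ltW.
  exact: (@tnorm_x0B R n m d h B1).
by rewrite mulrA divfK.
Qed.

Definition Gf x0 y := N%:R^-1 *:
  \sum_(i < N) (Gx x0 y (zi x0 i) + Gz x0 y (zi x0 i) *m B1^T).

Lemma grad_Lk x0 y : has_grad (fun x => Lk l X W B1 B0 x y) x0 (Gf x0 y).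
Proof.
apply: has_grad_scale; first by rewrite invr_gt0 ltr0n.
by apply: has_grad_sum => i; apply: grad_i.
Qed.

Lemma Gf_lip (ell1 B : R) : 0 <= ell1 -> frob B1 <= B ->
  (forall x y z x' y' z',
       tnorm (Gx x y z - Gx x' y' z') (Gy x y z - Gy x' y' z')
             (Gz x y z - Gz x' y' z')
       <= ell1 * tnorm (x - x') (y - y') (z - z')) ->
  forall x0 y y', enorm (Gf x0 y - Gf x0 y') <= ell1 * (1 + B) ^+ 2 * enorm (y - y').
Proof.
move=> e0 hB hl x0 y y'.
rewrite /Gf -scalerBr -sumrB; apply: avg_bound_v => i.
set z := zi x0 i.
have E : Gx x0 y z + Gz x0 y z *m B1^T - (Gx x0 y' z + Gz x0 y' z *m B1^T)
   = (Gx x0 y z - Gx x0 y' z) + (Gz x0 y z - Gz x0 y' z) *m B1^T.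
  by rewrite mulmxBl opprD addrACA.
rewrite E; apply: (le_trans (enormD _ _)).
have T := hl x0 y z x0 y' z; rewrite !subrr tnorm_0y0 in T.
have t1 := tnorm_ge1 (Gx x0 y z - Gx x0 y' z) (Gy x0 y z - Gy x0 y' z) (Gz x0 y z - Gz x0 y' z).
have t3 := tnorm_ge3 (Gx x0 y z - Gx x0 y' z) (Gy x0 y z - Gy x0 y' z) (Gz x0 y z - Gz x0 y' z).
have t4 := enorm_mulmx (Gz x0 y z - Gz x0 y' z) B1^T; rewrite frob_tr in t4.
have B0' : 0 <= B by apply: le_trans (frob_ge0 B1) hB.
have n1 := enorm_ge0 (Gz x0 y z - Gz x0 y' z).
have n2 := enorm_ge0 (y - y').
have P : 0 <= ell1 * enorm (y - y') by rewrite mulr_ge0.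
set T0 := tnorm _ _ _ in t1 t3 T.
set a := enorm (Gx x0 y z - Gx x0 y' z) in t1 *.
set b := enorm (Gz x0 y z - Gz x0 y' z) in t3 t4 n1 *.
set q := enorm (y - y') in P n2 T *.
have fb := frob_ge0 B1.
have h1 : b * frob B1 <= T0 * B by apply: ler_pM => //.
have h2 : ell1 * (1 + B) ^+ 2 * q = (ell1 * q) * (1 + B) ^+ 2 by ring.
rewrite h2.
have h3 : (ell1 * q) * (1 + B) <= (ell1 * q) * (1 + B) ^+ 2.
  by apply: ler_wpM2l => //; nra.
have h4 : T0 * (1 + B) <= (ell1 * q) * (1 + B) by apply: ler_wpM2r => //; lra.
nra.
Qed.
End G.
End Prob.

Unset Implicit Arguments.

Lemma le_congr (R : realType) (x x' y y' : R) : x' <= y' -> x = x' -> y = y' -> x <= y.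
Proof. by move=> h -> ->. Qed.
Arguments le_congr {R x x' y y'}.

Lemma arith (R : realType) (G P L1 B ell1 eps k dl dmax D S A Bv Phi0 Phis Phit : R) :
  0 < G -> 0 < P -> 0 < k -> 0 < dl -> dl <= dmax -> 0 <= B -> 0 <= L1 ->
  0 <= ell1 -> 0 <= eps -> 0 <= S ->
  D <= ell1 * (1 + B) ^+ 2 * eps -> G - P <= D ->
  S <= dl * (2 * D / P) ->
  Phi0 - L1 * eps <= A -> Bv <= Phis -> Phis <= Phit + L1 * (1 + B) * S ->
  k * P * Num.min dl 1 <= Phi0 - Phit ->
  (let hL1 := L1 * (1 + B) in
   let hl1 := ell1 * (1 + B) ^+ 2 in
   eps <= Num.min (G / (2 * hl1))
            (Num.min (P * G * k / (8 * hL1 * hl1 * Num.max dmax 1))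
                     (G * Num.min dl 1 * k / (16 * hL1)))) ->
  k / 8 * G * Num.min dl 1 <= A - Bv.
Proof.
move=> G0 P0 k0 d0 ddm B0 L0 e0 eps0 S0 hD hGP hS hA hB hC hE.
rewrite /= !le_min => /and3P[e1 e2 e3].
set hL := L1 * (1 + B) in hC e2 e3 *.
set hl := ell1 * (1 + B) ^+ 2 in hD e1 e2 *.
set mm := Num.min dl 1 in hE e3 *.
set M := Num.max dmax 1 in e2.
have hL0 : 0 <= hL by rewrite /hL mulr_ge0 // addr_ge0.
have hl0 : 0 <= hl by rewrite /hl mulr_ge0 // exprn_ge0 // addr_ge0.
have m0 : 0 < mm by rewrite /mm lt_min d0 ltr01.
have M1 : 1 <= M by rewrite /M le_max lexx orbT.
have dM : dl <= M * mm.
  rewrite /M /mm; case: (leP dl 1) => h1.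
    by rewrite ler_peMl ?(ltW d0) ?le_max ?lexx ?orbT.
  by rewrite mulr1 le_max ddm.
have f9 : L1 * eps <= hL * eps.
  by apply: ler_wpM2r => //; rewrite /hL ler_peMr // lerDl.
clearbody hL hl mm M.
have M0 : 0 < M by apply: lt_le_trans ltr01 M1.
have f1 : hl * eps <= G / 2.
  have [->|hp] := eqVneq hl 0; first by rewrite mul0r divr_ge0 // ltW.
  have hp' : 0 < hl by rewrite lt_neqAle eq_sym hp hl0.
  have h2 : 0 < 2 * hl by rewrite mulr_gt0.
  move: e1; rewrite (ler_pdivlMr _ _ h2) => H.
  have h2b : (0:R) < 2 by [].
  rewrite (ler_pdivlMr _ _ h2b); apply: (le_congr H); ring.
have f2 : 8 * (hL * hl * eps) * M <= P * G * k.
  have [hz|hp] := eqVneq (hL * hl) 0.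
    rewrite hz mul0r mulr0 mul0r; apply: mulr_ge0; last exact: ltW.
    by apply: mulr_ge0; exact: ltW.
  have hp' : 0 < hL * hl by rewrite lt_neqAle eq_sym hp mulr_ge0.
  have h8 : 0 < 8 * (hL * hl) * M by rewrite mulr_gt0 // mulr_gt0.
  have ee : 8 * hL * hl * M = 8 * (hL * hl) * M by ring.
  rewrite ee in e2.
  move: e2; rewrite (ler_pdivlMr _ _ h8) => H.
  apply: (le_congr H); ring.
have f3 : hL * eps * 16 <= G * mm * k.
  have [->|hp] := eqVneq hL 0; first by rewrite !mul0r !mulr_ge0 // ltW.
  have hp' : 0 < hL by rewrite lt_neqAle eq_sym hp hL0.
  have h16 : 0 < 16 * hL by rewrite mulr_gt0.
  move: e3; rewrite (ler_pdivlMr _ _ h16) => H.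
  apply: (le_congr H); ring.
have f4 : S * P <= dl * 2 * D.
  by move: hS; rewrite mulrA -ler_pdivlMr // mulrA.
have f5 : hL * S * P <= 2 * dl * (hL * hl * eps).
  have a : hL * (S * P) <= hL * (dl * 2 * D) by apply: ler_wpM2l.
  have b : hL * (dl * 2 * D) <= hL * (dl * 2 * (hl * eps)).
    apply: ler_wpM2l => //; apply: ler_wpM2l => //.
    by rewrite mulr_ge0 // ltW.
  apply: (le_congr (le_trans a b)); ring.
have f6 : 8 * dl * (hL * hl * eps) * M <= M * mm * (P * G * k).
  have a : dl * (8 * (hL * hl * eps) * M) <= dl * (P * G * k).
    by apply: ler_wpM2l => //; exact: ltW.
  have b : dl * (P * G * k) <= (M * mm) * (P * G * k).
    by apply: ler_wpM2r => //; rewrite !mulr_ge0 // ltW.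
  apply: (le_congr (le_trans a b)); ring.
have f7 : 8 * dl * (hL * hl * eps) <= mm * (P * G * k).
  have a : M * (8 * dl * (hL * hl * eps)) <= M * (mm * (P * G * k)).
    apply: (le_congr f6); ring.
  by move: a; rewrite ler_pM2l.
have f8 : 4 * hL * S <= mm * G * k.
  have a : (4 * hL * S) * P <= (mm * G * k) * P.
    have : (4 * hL * S) * P <= 8 * dl * (hL * hl * eps).
      apply: (le_congr (_ : 4 * (hL * S * P) <= 4 * (2 * dl * (hL * hl * eps)))).
      - by apply: ler_wpM2l.
      - ring.
      - ring.
    move=> c; apply: (le_congr (le_trans c f7)) => //; ring.
  by move: a; rewrite ler_pM2r.
have f10 : k * G * mm <= 2 * (k * P * mm).
  have H : G <= 2 * P by lra.
  have a : (k * mm) * G <= (k * mm) * (2 * P) by apply: ler_wpM2l => //; rewrite mulr_ge0 // ltW.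
  apply: (le_congr a); ring.
have -> : k / 8 * G * mm = (k * G * mm) / 8 by ring.
have g1 : hL * S <= (mm * G * k) / 4.
  apply: (le_congr (_ : (4 * hL * S) / 4 <= (mm * G * k) / 4)).
  - by rewrite ler_pM2r ?invr_gt0.
  - by field.
  - done.
have g2 : hL * eps <= (G * mm * k) / 16.
  apply: (le_congr (_ : (hL * eps * 16) / 16 <= (G * mm * k) / 16)).
  - by rewrite ler_pM2r ?invr_gt0.
  - by field.
  - done.
have g3 : k * G * mm = mm * G * k by ring.
have g4 : G * mm * k = mm * G * k by ring.
rewrite g4 in g2.
rewrite g3 in f10 *.
have X0 : 0 <= mm * G * k by rewrite !mulr_ge0 // ltW.
lra.
Qed.
Arguments arith {R G P L1 B ell1 eps k dl dmax D S A Bv Phi0 Phis Phit}.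


Lemma unit_diff (R : realType) k (a b : 'rV[R]_k) : a != 0 -> b != 0 ->
  enorm ((enorm a)^-1 *: a - (enorm b)^-1 *: b) <= 2 * enorm (a - b) / enorm b.
Proof.
move=> /enorm_gt0 pa /enorm_gt0 pb.
have na : enorm a != 0 by rewrite gt_eqF.
have nb : enorm b != 0 by rewrite gt_eqF.
have E : (enorm a)^-1 *: a - (enorm b)^-1 *: b
   = (enorm b)^-1 *: (a - b) + ((enorm a)^-1 - (enorm b)^-1) *: a.
  by apply/rowP => j; rewrite !mxE; ring.
rewrite E; apply: (le_trans (enormD _ _)); rewrite !enormZ.
have F1 : ((enorm a)^-1 - (enorm b)^-1) * enorm a = (enorm b - enorm a) / enorm b.
  by field; rewrite nb na.
have F2 : `|(enorm a)^-1 - (enorm b)^-1| * enorm a = `|enorm b - enorm a| / enorm b.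
  rewrite -{2}(ger0_norm (enorm_ge0 a)) -normrM F1 normrM normrV ?unitfE //.
  by rewrite (ger0_norm (enorm_ge0 b)).
rewrite F2 ger0_norm ?invr_ge0 ?enorm_ge0 //.
have F3 : `|enorm b - enorm a| <= enorm (a - b).
  by apply: (le_trans (enormB_rev b a)); rewrite -opprB enormN.
have F4 : `|enorm b - enorm a| / enorm b <= enorm (a - b) / enorm b.
  by rewrite ler_pM2r ?invr_gt0.
apply: (le_congr (lerD (lexx ((enorm b)^-1 * enorm (a - b))) F4)) => //; ring.
Qed.


Theorem lemma2 (R : realType) (n m d : nat)
  (l : 'rV[R]_n -> 'rV[R]_m -> 'rV[R]_d -> R) (ell1 L1 mu : R)
  (Y : 'rV[R]_m -> Prop)
  (N : nat) (X : 'I_N -> 'rV[R]_n) (W : 'I_N -> 'rV[R]_d)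
  (B1 : 'M[R]_(n, d)) (B0 : 'rV[R]_d) (B : R)
  (xhat : 'rV[R]_n) (delta delta_max : R)
  (Phi : 'rV[R]_n -> R) (ystar yi : 'rV[R]_n -> 'rV[R]_m)
  (gPhi gk : 'rV[R]_n) (kappa_t eps : R) :
  smooth3 ell1 l ->
  lipschitz3 L1 l ->
  nonempty_set Y -> closed_set Y -> convex_set Y -> bounded_set Y ->
  0 < mu ->
  (forall x z, strongly_concave_on mu Y (fun y => l x y z)) ->
  (0 < N)%N ->
  least_squares_fit X W B1 B0 ->
  frob B1 <= B ->
  0 < delta -> delta <= delta_max ->
  (forall x, Y (ystar x)) ->
  (forall x y, Y y -> Lk l X W B1 B0 x y <= Lk l X W B1 B0 x (ystar x)) ->
  (forall x, Phi x = Lk l X W B1 B0 x (ystar x)) ->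
  (forall x, eball xhat delta x -> Y (yi x)) ->
  has_grad (fun x => Lk l X W B1 B0 x (yi xhat)) xhat gk ->
  has_grad Phi xhat gPhi ->
  gk != 0 -> gPhi != 0 ->
  0 < kappa_t ->
  Phi xhat - Phi (xhat + (- (delta / enorm gPhi)) *: gPhi)
    >= kappa_t * enorm gPhi * Num.min delta 1 ->
  (forall x, eball xhat delta x -> enorm (yi x - ystar x) <= eps) ->
  (let hL1 := L1 * (1 + B) in
   let hl1 := ell1 * (1 + B) ^+ 2 in
   eps <= Num.min (enorm gk / (2 * hl1))
            (Num.min (enorm gPhi * enorm gk * kappa_t
                        / (8 * hL1 * hl1 * Num.max delta_max 1))
                     (enorm gk * Num.min delta 1 * kappa_t / (16 * hL1)))) ->
  let sk := (- (delta / enorm gk)) *: gk in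
  Lk l X W B1 B0 xhat (yi xhat) - Lk l X W B1 B0 (xhat + sk) (yi (xhat + sk))
    >= kappa_t / 8 * enorm gk * Num.min delta 1.
Proof.
move=> [Gx [Gy [Gz [hg hlip]]]] hL _ _ _ _ _ _ N0 _ hB d0 ddm hys hmax hPhi hyi
  hgk hgP gk0 gP0 k0 hdec hclose heps.
rewrite [is_true _]/=.
set sk := (- (delta / enorm gk)) *: gk.
have B0' : 0 <= B := le_trans (frob_ge0 B1) hB.
have xin : eball xhat delta xhat by rewrite /eball subrr enorm0 ltW.
have eps0 : 0 <= eps := le_trans (enorm_ge0 _) (hclose xhat xin).
have G0 := enorm_gt0 gk0; have P0 := enorm_gt0 gP0.
have L0 : 0 <= L1.
  have H := hL gk (0 : 'rV[R]_m) (0 : 'rV[R]_d) 0 0 0.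
  rewrite !subr0 tnorm_x00 in H.
  by have := le_trans (normr_ge0 _) H; rewrite pmulr_lge0.
have e0 : 0 <= ell1.
  have H := hlip gk (0 : 'rV[R]_m) (0 : 'rV[R]_d) 0 0 0.
  rewrite !subr0 tnorm_x00 in H.
  by have := le_trans (sqrtr_ge0 _) H; rewrite pmulr_lge0.
pose GF := Gf X W B1 B0 Gx Gz xhat.
have gkE : gk = GF (yi xhat).
  apply/eqP; rewrite -subr_eq0; apply/eqP.
  apply: (has_grad_min (has_grad_add hgk (has_grad_opp (grad_Lk X W B1 B0 N0 hg xhat (yi xhat))))).
  by move=> z /=; rewrite !subrr.
have gPE : gPhi = GF (ystar xhat).
  apply/eqP; rewrite -subr_eq0; apply/eqP.
  apply: (has_grad_min (has_grad_add hgP (has_grad_opp (grad_Lk X W B1 B0 N0 hg xhat (ystar xhat))))).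
  move=> z /=; rewrite hPhi subrr subr_ge0 hPhi; exact: hmax.
have dg : enorm (gk - gPhi) <= ell1 * (1 + B) ^+ 2 * eps.
  rewrite gkE gPE; apply: (le_trans (Gf_lip X W B0 N0 e0 hB hlip xhat _ _)).
  apply: ler_wpM2l; first by rewrite mulr_ge0 // exprn_ge0 // addr_ge0.
  exact: hclose.
have hGP : enorm gk - enorm gPhi <= enorm (gk - gPhi).
  exact: (le_trans (ler_norm _) (enormB_rev _ _)).
set st := (- (delta / enorm gPhi)) *: gPhi in hdec.
have hS : enorm ((xhat + sk) - (xhat + st)) <= delta * (2 * enorm (gk - gPhi) / enorm gPhi).
  have E : (xhat + sk) - (xhat + st)
     = (- delta) *: ((enorm gk)^-1 *: gk - (enorm gPhi)^-1 *: gPhi).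
    by rewrite /sk /st; apply/rowP => j; rewrite !mxE; ring.
  rewrite E enormZ normrN ger0_norm ?(ltW d0) //.
  by apply: ler_wpM2l; [exact: ltW | exact: unit_diff].
have skin : eball xhat delta (xhat + sk).
  rewrite /eball addrC addKr /sk enormZ normrN ger0_norm ?divfK ?gt_eqF //.
  by rewrite divr_ge0 // ltW.
have hA : Phi xhat - L1 * eps <= Lk l X W B1 B0 xhat (yi xhat).
  have H := LipY X W B1 B0 N0 hL xhat (yi xhat) (ystar xhat).
  have H2 : L1 * enorm (yi xhat - ystar xhat) <= L1 * eps.
    by apply: ler_wpM2l => //; exact: hclose.
  rewrite hPhi; move: (le_trans H H2); rewrite ler_norml => /andP[H3 _]; lra.
have hBv : Lk l X W B1 B0 (xhat + sk) (yi (xhat + sk)) <= Phi (xhat + sk).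
  by rewrite hPhi; apply: hmax; apply: hyi.
have hC : Phi (xhat + sk) <= Phi (xhat + st) + L1 * (1 + B) * enorm ((xhat + sk) - (xhat + st)).
  set x := xhat + sk; set x' := xhat + st.
  have H := LipX X W B1 B0 N0 L0 hL x x' (ystar x).
  have H2 : Lk l X W B1 B0 x' (ystar x) <= Phi x' by rewrite hPhi; apply: hmax.
  have H3 : L1 * (1 + frob B1) * enorm (x - x') <= L1 * (1 + B) * enorm (x - x').
    apply: ler_wpM2r; first exact: enorm_ge0.
    by apply: ler_wpM2l => //; rewrite lerD2l.
  move: (le_trans H H3); rewrite ler_norml => /andP[_ H4].
  rewrite !hPhi; rewrite hPhi in H2; lra.
exact: (arith G0 P0 k0 d0 ddm B0' L0 e0 eps0 (enorm_ge0 _) dg hGP hS hA hBv hC hdec heps).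
Qed.
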